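(* Let $A^*\in\mathbb C^{N\times n}$ be isometric ($AA^*=I_n$), $x_0\in\mathbb C^n$, $b=|A^*x_0|$, and let $\mathcal X$ be one of $\mathbb C^n,\mathbb R^n,\mathbb R^n_+$. Let $x_*$ be a fixed point of AP in the sense that there is $u\in\mathbb C^N$ with $|u(j)|=1$ for all $j$ and $u(j)=1$ whenever $(A^*x_* )(j)\ne0$, such that $x_*=\big[A\big(b\odot u\odot\frac{A^*x_*}{|A^*x_*|}\big)\big]_{\mathcal X}$. Then $\|x_*\|\le\|b\|$, and if $\|x_*\|=\|b\|$ then $x_*\in\mathcal X$ and $|A^*x_*|=b$ (i.e. $x_*$ solves the phase retrieval problem). Equivalently, if $x_*$ is not a phase retrieval solution then $\|x_*\|<\|b\|$.
   Context: $|y|$ is the componentwise modulus, $\odot$ the componentwise product, $y/|y|$ the componentwise quotient with convention $y(j)/|y(j)|:=1$ when $y(j)=0$; $[\cdot]_{\mathcal X}$ is the Euclidean projection onto the closed convex set $\mathcal X$. *)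

(* Defs.v *)
(* The complex field is modelled by an arbitrary
   numClosedFieldType C (e.g. algC). *)
From HB Require Import structures.
From mathcomp Require Import all_boot all_order all_algebra.
Set Implicit Arguments. Unset Strict Implicit. Unset Printing Implicit Defensive.
Import Order.TTheory GRing.Theory Num.Theory.
Local Open Scope ring_scope.

Section Defs.
Variable C : numClosedFieldType.

Definition adjmx m n (A : 'M[C]_(m, n)) : 'M[C]_(n, m) := map_mx Num.conj A^T.

Definition cabs m (y : 'cV[C]_m) : 'cV[C]_m := map_mx (fun c => `|c|) y.

(* y/|y| componentwise, with convention 1 when y(j) = 0 *)
Definition phase (c : C) : C := if c == 0 then 1 else c / `|c|.
Definition cphase m (y : 'cV[C]_m) : 'cV[C]_m := map_mx phase y.

Definition hadamard m (y z : 'cV[C]_m) : 'cV[C]_m := \col_j (y j 0 * z j 0).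

Definition vnorm m (y : 'cV[C]_m) : C := sqrtC (\sum_(j < m) `|y j 0| ^+ 2).

Inductive cset := CsetC | CsetR | CsetRplus.

Definition in_cset (X : cset) m (x : 'cV[C]_m) : Prop :=
  match X with
  | CsetC => True
  | CsetR => forall i, x i 0 \is Num.real
  | CsetRplus => forall i, 0 <= x i 0
  end.

Definition is_proj (X : cset) m (z y : 'cV[C]_m) : Prop :=
  in_cset X y /\ forall w, in_cset X w -> vnorm (z - y) <= vnorm (z - w).

End Defs.

(* Main.v *)
Require Import Defs.
From HB Require Import structures.
From mathcomp Require Import all_boot all_order all_algebra.
From mathcomp Require Import ring.
Import Order.TTheory GRing.Theory Num.Theory.
Local Open Scope ring_scope.

Set Implicit Arguments.
Section Helpers.
Context {C : numClosedFieldType}.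

Lemma adjmxE m n (A : 'M[C]_(m,n)) i j : adjmx A i j = (A j i)^*.
Proof. by rewrite !mxE. Qed.

Lemma adjmxM m n p (A : 'M[C]_(m,n)) (B : 'M[C]_(n,p)) :
  adjmx (A *m B) = adjmx B *m adjmx A.
Proof.
apply/matrixP=> i j; rewrite !mxE rmorph_sum; apply: eq_bigr => k _.
by rewrite !mxE rmorphM mulrC.
Qed.

Lemma adjmxK m n (A : 'M[C]_(m,n)) : adjmx (adjmx A) = A.
Proof. by apply/matrixP=> i j; rewrite !mxE conjCK. Qed.

Lemma cabsE m (v : 'cV[C]_m) j : cabs v j 0 = `|v j 0|.
Proof. by rewrite mxE. Qed.
Lemma cphaseE m (v : 'cV[C]_m) j : cphase v j 0 = phase (v j 0).
Proof. by rewrite mxE. Qed.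
Lemma hadamardE m (v w : 'cV[C]_m) j : hadamard v w j 0 = v j 0 * w j 0.
Proof. by rewrite mxE. Qed.

Lemma sqsum m (v : 'cV[C]_m) : \sum_j `|v j 0| ^+ 2 = (adjmx v *m v) 0 0.
Proof. by rewrite mxE; apply: eq_bigr => j _; rewrite normCK adjmxE mulrC. Qed.

Lemma sqsum_ge0 m (v : 'cV[C]_m) : 0 <= \sum_j `|v j 0| ^+ 2.
Proof. by apply: sumr_ge0 => j _; rewrite exprn_ge0. Qed.

Lemma vnorm_le m (p q : 'cV[C]_m) :
  vnorm p <= vnorm q -> \sum_j `|p j 0| ^+ 2 <= \sum_j `|q j 0| ^+ 2.
Proof. by rewrite /vnorm ler_sqrtC // nnegrE sqsum_ge0. Qed.

Lemma term (yj bj uj : C) : (yj != 0 -> uj = 1) ->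
  yj^* * (bj * (uj * phase yj)) = bj * `|yj|.
Proof.
move=> hu; rewrite /phase; have [->|hy] := eqVneq yj 0.
  by rewrite rmorph0 mul0r normr0 mulr0.
have hn : `|yj| != 0 by rewrite normr_eq0.
rewrite hu // mul1r.
have -> : yj^* * (bj * (yj / `|yj|)) = bj * (yj * yj^*) / `|yj| by field.
rewrite -normCK; field; exact: hn.
Qed.

Lemma expand m (p q : 'cV[C]_m) t : t \is Num.real ->
  \sum_i `|(p - t *: q) i 0| ^+ 2 =
  \sum_i `|p i 0| ^+ 2
  - t * (\sum_i p i 0 * (q i 0)^* + (\sum_i p i 0 * (q i 0)^*)^*)
  + t ^+ 2 * \sum_i `|q i 0| ^+ 2.
Proof.
move=> ht.
have -> : \sum_i `|(p - t *: q) i 0| ^+ 2 =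
  \sum_i (`|p i 0| ^+ 2 - t * (p i 0 * (q i 0)^* + (p i 0 * (q i 0)^*)^*)
  + t ^+ 2 * `|q i 0| ^+ 2).
  apply: eq_bigr => i _; rewrite !mxE !normCK rmorphB rmorphM /= (conj_Creal ht).
  rewrite ?rmorphM /=. have -> : (q i 0)^*^* = q i 0 by apply: conjCK. ring.
rewrite big_split /= sumrB rmorph_sum -big_split /= -mulr_sumr -mulr_sumr.
done.
Qed.

End Helpers.
Unset Implicit Arguments.


Theorem mainTheorem4 (C : numClosedFieldType) (n N : nat)
  (A : 'M[C]_(n, N)) (x0 : 'cV[C]_n) (X : cset) (xs : 'cV[C]_n)
  (u : 'cV[C]_N) :
  A *m adjmx A = 1%:M ->
  (forall j, `|u j 0| = 1) ->
  (forall j, (adjmx A *m xs) j 0 != 0 -> u j 0 = 1) ->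
  is_proj X
    (A *m hadamard (cabs (adjmx A *m x0))
            (hadamard u (cphase (adjmx A *m xs))))
    xs ->
  vnorm xs <= vnorm (cabs (adjmx A *m x0)) /\
  (vnorm xs = vnorm (cabs (adjmx A *m x0)) ->
     in_cset X xs /\ cabs (adjmx A *m xs) = cabs (adjmx A *m x0)).
Proof.
move=> hA hu hu1 [hX hmin].
set y := adjmx A *m xs in hu1 hmin *.
set bv := cabs (adjmx A *m x0) in hmin *.
set z := A *m _ in hmin.
set d := \sum_i `|xs i 0| ^+ 2.
set B := \sum_j `|bv j 0| ^+ 2.
set s := \sum_j bv j 0 * `|y j 0|.
have bv_ge0 j : 0 <= bv j 0 by rewrite /bv cabsE.
have hd_y : \sum_j `|y j 0| ^+ 2 = d.
  by rewrite /d !sqsum /y adjmxM adjmxK !mulmxA -(mulmxA _ A) hA mulmx1.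
have s_ge0 : 0 <= s by apply: sumr_ge0 => j _; rewrite mulr_ge0.
have d_ge0 : 0 <= d by apply: sqsum_ge0.
have hcross : \sum_i z i 0 * (xs i 0)^* = s.
  transitivity ((adjmx xs *m z) 0 0).
    by rewrite mxE; apply: eq_bigr => i _; rewrite adjmxE mulrC.
  have -> : adjmx xs *m z = adjmx y *m hadamard bv (hadamard u (cphase y)).
    by rewrite /z /y mulmxA adjmxM adjmxK.
  rewrite mxE; apply: eq_bigr => j _.
  by rewrite adjmxE !hadamardE cphaseE term //; apply: hu1.
have hin t : 0 <= t -> in_cset X (t *: xs).
  move=> ht; case: X hX hmin => //= hX _ i; rewrite mxE.
    by rewrite rpredM // ger0_real.
  by rewrite mulr_ge0.
have hk t : 0 <= t -> 0 <= t ^+ 2 * d - t * (s + s) - (d - (s + s)).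
  move=> ht; have := vnorm_le _ _ (hmin _ (hin t ht)).
  rewrite -{1}[xs]scale1r !expand ?ger0_real // hcross conj_Creal ?ger0_real //.
  rewrite -subr_ge0 -/d.
  set a := \sum_i _.
  suff -> : a - t * (s + s) + t ^+ 2 * d - (a - 1 * (s + s) + 1 ^+ 2 * d) =
     t ^+ 2 * d - t * (s + s) - (d - (s + s)) by [].
  ring.
have hds : d <= s.
  rewrite real_leNgt ?ger0_real //; apply/negP => hsd.
  have dpos : 0 < d by apply: le_lt_trans hsd.
  have := hk (s / d) (divr_ge0 s_ge0 d_ge0).
  have dn0 : d != 0 by rewrite gt_eqF.
  rewrite -(pmulr_rge0 _ dpos).
  have -> : d * ((s / d) ^+ 2 * d - s / d * (s + s) - (d - (s + s))) =
     - (d - s) ^+ 2 by field.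
  rewrite oppr_ge0 => h.
  have hp : 0 < (d - s) ^+ 2 by rewrite exprn_gt0 // subr_gt0.
  by have := lt_le_trans hp h; rewrite ltxx.
have hr j : (bv j 0 - `|y j 0|) \is Num.real.
  by rewrite rpredB // ger0_real.
have hsumr : \sum_j (bv j 0 - `|y j 0|) ^+ 2 = B - (s + s) + d.
  transitivity (\sum_j (`|bv j 0| ^+ 2 - (bv j 0 * `|y j 0| + bv j 0 * `|y j 0|)
      + `|y j 0| ^+ 2)).
    by apply: eq_bigr => j _; rewrite [`|bv j 0|]ger0_norm //; ring.
  by rewrite big_split sumrB big_split /= hd_y.
have hsum_ge0 : 0 <= \sum_j (bv j 0 - `|y j 0|) ^+ 2.
  by apply: sumr_ge0 => j _; rewrite -real_normK // exprn_ge0.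
have hdB : d <= B.
  rewrite -subr_ge0.
  have -> : B - d = (B - (s + s) + d) + ((s - d) + (s - d)) by ring.
  by rewrite addr_ge0 // -?hsumr // addr_ge0 // subr_ge0.
split.
  by rewrite /vnorm ler_sqrtC // nnegrE ?d_ge0 // sqsum_ge0.
move=> heq; split => //.
have hdB' : d = B by apply: sqrtC_inj.
have h0 : \sum_j (bv j 0 - `|y j 0|) ^+ 2 = 0.
  apply/eqP; rewrite eq_le hsum_ge0 andbT hsumr -hdB'.
  rewrite -subr_ge0.
  have -> : 0 - (d - (s + s) + d) = (s - d) + (s - d) by ring.
  by rewrite addr_ge0 // subr_ge0.
apply/matrixP => j k; rewrite (ord1 k) cabsE -/y.
have hge i : 0 <= (bv i 0 - `|y i 0|) ^+ 2 by rewrite -real_normK // exprn_ge0.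
have := psumr_eq0P (fun i _ => hge i) h0 (i := j) isT.
by move/eqP; rewrite expf_eq0 /= subr_eq0 => /eqP ->.
Qed.
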